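(* For every prime $p$ there exists a linear $(2,p,p)$-AONT, i.e. an invertible $p\times p$ matrix over $\mathbb{F}_p$ all of whose $2\times2$ submatrices are invertible.
   Context: A linear $(t,s,q)$-AONT over $\mathbb{F}_q$ is given by an invertible $s\times s$ matrix $M$ over $\mathbb{F}_q$ (the transform being $(y_1,\dots,y_s)=(x_1,\dots,x_s)M^{-1}$); $M$ defines a linear $(t,s,q)$-AONT iff every $t\times t$ submatrix of $M$ is invertible. *)

(* Defs.v *)
From mathcomp Require Import all_boot all_order all_algebra.
Set Implicit Arguments. Unset Strict Implicit. Unset Printing Implicit Defensive.
Import GRing.Theory.
Local Open Scope ring_scope.

(* A t x t submatrix of M : 'M_s is given by t distinct rows (injective f)
   and t distinct columns (injective g); we take it as mxsub f g M. *)
Definition all_submx_invertible (F : fieldType) (t s : nat) (M : 'M[F]_s) : Prop :=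
  forall (f g : 'I_t -> 'I_s), injective f -> injective g ->
    mxsub f g M \in unitmx.

Definition linear_AONT (F : fieldType) (t s : nat) (M : 'M[F]_s) : Prop :=
  M \in unitmx /\ all_submx_invertible t M.

(* Main.v *)
Require Import Defs.
From mathcomp Require Import all_boot all_order all_algebra finfield.
From mathcomp Require Import ring zify.
Set Implicit Arguments. Unset Strict Implicit. Unset Printing Implicit Defensive.
Import GRing.Theory.
Local Open Scope ring_scope.
Definition mm (F : fieldType) (x y : F) : F :=
  if x == 0 then (if y == 0 then 0 else -1)
  else if y == 0 then -1 else (x * y - 1)^-1.

Lemma mm_2x2 (F : fieldType) (a b c d : F) :
  a != b -> c != d -> mm a c * mm b d - mm a d * mm b c != 0.
Proof.
move=> ab cd; rewrite subr_eq0 /mm.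
have inv_eq (x y : F) : x^-1 = y^-1 -> x = y by apply: invr_inj.
case: (eqVneq a 0) => [a0|a0]; case: (eqVneq b 0) => [b0|b0];
  case: (eqVneq c 0) => [c0|c0]; case: (eqVneq d 0) => [d0|d0].
all: try by move: ab; rewrite a0 b0 eqxx.
all: try by move: cd; rewrite c0 d0 eqxx.
all: rewrite ?mulr0 ?mul0r ?mulN1r ?mulrN1 ?opprK ?eqxx ?oner_eq0 ?(eq_sym 0 1) ?oner_eq0 //.
- by apply/eqP => /oppr_inj/inv_eq/addIr/(mulfI b0) dc; rewrite dc eqxx in cd.
- by apply/eqP => /oppr_inj/inv_eq/addIr/(mulfI a0) dc; rewrite dc eqxx in cd.
- by apply/eqP => /oppr_inj/inv_eq/addIr/(mulIf d0) dc; rewrite dc eqxx in ab.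
- by apply/eqP => /oppr_inj/inv_eq/addIr/(mulIf c0) dc; rewrite dc eqxx in ab.
- apply/eqP; rewrite -!invfM => /inv_eq/eqP; rewrite -subr_eq0.
  have -> : (a * c - 1) * (b * d - 1) - (a * d - 1) * (b * c - 1) = - ((a - b) * (c - d)) by ring.
  by rewrite oppr_eq0 mulf_eq0 !subr_eq0 (negPf ab) (negPf cd).
Qed.

Lemma det2 (R : comNzRingType) (A : 'M[R]_2) :
  \det A = A 0 0 * A 1 1 - A 0 1 * A 1 0.
Proof.
rewrite (expand_det_row _ 0) !big_ord_recl big_ord0 addr0 /cofactor !det_mx11 !mxE /=.
rewrite expr0 mul1r expr1 mulN1r mulrN.
by congr (A _ _ * A _ _ - A _ _ * A _ _); apply: val_inj.
Qed.

Lemma xi_inj (p : nat) (hp : prime p) (i j : 'I_p) :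
  ((i : nat)%:R : 'F_p) = (j : nat)%:R -> i = j.
Proof.
wlog ij : i j / (i <= j)%N.
  move=> H e; case: (leqP i j) => [/H|/ltnW /H]; first exact.
  by move=> H'; apply/esym/H'.
move=> e; apply/val_inj/eqP; rewrite eqn_leq ij /=.
have : ((j - i)%N%:R : 'F_p) == 0 by rewrite natrB // e subrr.
rewrite -(dvdn_pcharf (pchar_Fp hp)) => dv.
rewrite -subn_eq0; apply/negPn/negP => ne.
have : (0 < j - i)%N by rewrite lt0n.
move=> /dvdn_leq /(_ dv).
have := ltn_ord j; lia.
Qed.

Lemma xi0 (p : nat) (hp : prime p) (i : 'I_p) :
  (((i : nat)%:R : 'F_p) == 0) = ((i : nat) == 0%N).
Proof.
apply/eqP/eqP => [e|->//].
have p0 : (0 < p)%N by apply: prime_gt0.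
have := @xi_inj p hp i (Ordinal p0); rewrite e /= => /(_ erefl) -> //.
Qed.

Section S.
Variable n : nat.
Hypothesis hp : prime n.+2.
Local Notation F := 'F_(n.+2).

Lemma fermat (x : F) : x != 0 -> x ^+ n.+1 = 1.
Proof.
move=> x0; have := expf_card x; rewrite card_Fp // exprS => e.
by apply: (mulfI x0); rewrite mulr1 e.
Qed.

Lemma pow_inv (x : F) : (0 < n)%N -> x ^+ n = x^-1.
Proof.
move=> n0; have [->|x0] := eqVneq x 0; first by rewrite expr0n invr0; case: n n0.
by apply: (mulfI x0); rewrite mulfV // -exprS fermat.
Qed.

Lemma nfact k : (k < n.+2)%N -> ~~ (n.+2 %| k`!)%N.
Proof.
elim: k => [|k IH] lt; first by rewrite fact0 dvdn1.
rewrite factS Euclid_dvdM // negb_or IH ?(ltnW lt) // andbT.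
apply/negP => /(dvdn_leq (ltn0Sn k)); lia.
Qed.

Lemma binC_neq0 m : (m <= n)%N -> ('C(n, m)%:R : F) != 0.
Proof.
move=> mn; rewrite -(dvdn_pcharf (pchar_Fp hp)); apply/negP => dv.
have := nfact (ltnW (ltnSn n.+1)) ; rewrite -(bin_fact mn).
by rewrite (dvdn_mulr _ dv).
Qed.


Lemma mm_poly (x y : F) : (0 < n)%N -> odd n ->
  mm x y = (-1 + x * y) ^+ n + (1 - x ^+ n.+1) * (1 - y ^+ n.+1).
Proof.
move=> n0 on; have sg : (-1) ^+ n = -1 :> F by rewrite -signr_odd on expr1.
rewrite /mm; have [->|x0] := eqVneq x 0; have [->|y0] := eqVneq y 0;
  rewrite ?mul0r ?mulr0 ?addr0 ?sg ?expr0n ?subr0 ?mul1r ?mulr1 ?fermat // ?subrr ?mulr0 ?mul0r ?addr0.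
all: by rewrite ?addNr ?(addrC (-1)) ?pow_inv.
Qed.

Lemma sum_delta (R : nzRingType) m (a : 'I_m) (G : 'I_m -> R) :
  \sum_j (j == a)%:R * G j = G a.
Proof.
rewrite (bigD1 a) //= eqxx mul1r big1 ?addr0 // => j /negPf ->.
by rewrite mul0r.
Qed.

Definition xi (i : 'I_n.+2) : F := (i : nat)%:R.
Local Notation l := (@ord_max n.+1).
Definition VV := Vandermonde n.+2 (\row_j xi j).
Definition TT : 'M[F]_n.+2 := \matrix_(m, j)
  (if m == l then (j == ord0)%:R - (j == l)%:R else (j == m)%:R).
Definition WW := TT *m VV.

Lemma WW_E m k : WW m k = if m == l then 1 - xi k ^+ n.+1 else xi k ^+ m.
Proof.
rewrite /WW mxE; have [->|ml] := eqVneq m l.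
  under eq_bigr do rewrite /TT mxE eqxx mulrBl.
  by rewrite sumrB !sum_delta /VV /Vandermonde !mxE expr0.
under eq_bigr do rewrite /TT mxE (negPf ml).
by rewrite sum_delta /VV /Vandermonde !mxE.
Qed.

Lemma xi_inj2 (i j : 'I_n.+2) : xi i = xi j -> i = j.
Proof.
wlog ij : i j / (i <= j)%N.
  move=> H e; case: (leqP i j) => [/H|/ltnW /H]; first exact.
  by move=> H'; apply/esym/H'.
move=> e; apply/val_inj/eqP; rewrite eqn_leq ij /=.
have : ((j - i)%N%:R : F) == 0 by rewrite natrB // -/(xi j) -/(xi i) e subrr.
rewrite -(dvdn_pcharf (pchar_Fp hp)) => dv.
rewrite -subn_eq0; apply/negPn/negP => ne.
have : (0 < j - i)%N by rewrite lt0n.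
move=> /dvdn_leq /(_ dv).
have := ltn_ord j; lia.
Qed.

Definition DD : 'M[F]_n.+2 :=
  diag_mx (\row_m (if m == l then 1 else (-1) ^+ (n - m) *+ 'C(n, m))).
Definition MM := WW^T *m DD *m WW.

Lemma det_WW : \det WW != 0.
Proof.
rewrite det_mulmx mulf_neq0 //.
  rewrite det_trig.
    apply/prodf_neq0 => i _; rewrite mxE; have [->|il] := eqVneq i l.
      by rewrite /= sub0r oppr_eq0 oner_eq0.
    by rewrite (@eqxx _ i) oner_eq0.
  apply/is_trig_mxP => i j ij; rewrite mxE; have [il|_] := eqVneq i l.
    by move: ij (ltn_ord j); rewrite il /=; lia.
  by rewrite (_ : (j == i) = false) //; apply/negbTE; rewrite neq_ltn ij orbT.
rewrite det_Vandermonde; apply/prodf_neq0 => i _; apply/prodf_neq0 => j ij.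
rewrite !mxE subr_eq0; apply/eqP => /xi_inj2 e; by move: ij; rewrite e ltnn.
Qed.

Lemma det_DD : \det DD != 0.
Proof.
rewrite det_diag; apply/prodf_neq0 => m _; rewrite mxE.
have [_|ml] := eqVneq m l; first by rewrite oner_eq0.
rewrite -mulr_natr mulf_neq0 ?signr_eq0 // binC_neq0 //.
have : (m : nat) != n.+1 by apply: contra ml => /eqP e; apply/eqP/val_inj.
by move: (ltn_ord m) => a b; rewrite -ltnS ltn_neqAle b -ltnS.
Qed.

Lemma det_MM : \det MM != 0.
Proof. have h1 := det_WW; have h2 := det_DD; rewrite /WW det_mulmx in h1. rewrite /MM !det_mulmx det_tr /WW det_mulmx. by apply: mulf_neq0 => //; apply: mulf_neq0. Qed.

Lemma widen_neq (h : (n.+1 <= n.+2)%N) (j : 'I_n.+1) : (widen_ord h j == l) = false.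
Proof. by apply/negbTE; rewrite -val_eqE /= neq_ltn ltn_ord. Qed.

Lemma AM_MM : (0 < n)%N -> odd n -> \matrix_(i, k) mm (xi i) (xi k) = MM.
Proof.
move=> n0 on; apply/matrixP => i k; rewrite /MM mul_mx_diag [LHS]mxE [RHS]mxE mm_poly //.
under eq_bigr do rewrite mxE [WW^T _ _]mxE !WW_E mxE.
rewrite big_ord_recr /= !eqxx mulr1 addrC.
under eq_bigr do rewrite widen_neq.
rewrite addrC exprDn.
rewrite (eq_bigr (fun j : 'I_n.+1 => xi i ^+ j * ((-1) ^+ (n - j) *+ 'C(n, j)) * xi k ^+ j)) // => j _.
rewrite [_ * (_ *+ 'C(_, _))]mulrnAr [(_ *+ 'C(_, _)) * _]mulrnAl exprMn [xi i ^+ j * _]mulrC -mulrA.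
by [].
Qed.
End S.

Definition AM (p : nat) : 'M['F_p]_p :=
  \matrix_(i, k) mm ((i : nat)%:R : 'F_p) ((k : nat)%:R).

Lemma AM_sub p (hp : prime p) : all_submx_invertible 2 (AM p).
Proof.
move=> f g injf injg; rewrite unitmxE unitfE det2 !mxE.
apply: mm_2x2.
  by apply/eqP => /(xi_inj hp) /injf /(congr1 val).
by apply/eqP => /(xi_inj hp) /injg /(congr1 val).
Qed.

Theorem theorem2p12 (p : nat) (hp : prime p) :
  exists M : 'M['F_p]_p, linear_AONT 2 M.
Proof.
exists (AM p); split; last exact: AM_sub.
case: p hp => [|[|n]] hp; [by []|by []|].
case: n hp => [|n] hp.
  rewrite unitmxE unitfE det2 !mxE /mm /=.
  done.
have on : odd n.+1.
  case: (even_prime hp) => [/eqP //|]; by rewrite /= negbK.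
have E := AM_MM hp (ltn0Sn n) on.
rewrite /xi in E; rewrite /AM E unitmxE unitfE; exact: det_MM.
Qed.
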